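(* Let $q$ be a prime power and let $s,t$ be non-negative integers with $s+t>0$ and $t<q$. Put $n=s(q+1)+t+1$. Then the $[n,2,sq+t;(q-1)(t+1)]_q$ linear code is AFER-optimal; that is, there exists an $[n,2,sq+t]_q$ linear code having exactly $(q-1)(t+1)$ codewords of weight $sq+t$, the largest minimum distance of an $[n,2]_q$ linear code is $d(n,2,q)=sq+t$, and every $[n,2,sq+t]_q$ linear code has at least $(q-1)(t+1)$ codewords of weight $sq+t$, i.e. $e(n,2,q)=(q-1)(t+1)$.
   Context: An $[n,k]_q$ linear code is a $k$-dimensional subspace of $\mathbb{F}_q^n$; the weight of a vector is its number of nonzero coordinates; an $[n,k,d]_q$ code is one with minimum nonzero weight $d$, and $A_d(C)$ (the error coefficient) is the number of codewords of weight $d$. $d(n,k,q)$ denotes the largest minimum distance of an $[n,k]_q$ linear code, and $e(n,k,q)$ the smallest value of $A_{d(n,k,q)}(C)$ over all $[n,k,d(n,k,q)]_q$ linear codes $C$. An $[n,k,d]_q$ code $C$ is AFER-optimal if $d=d(n,k,q)$ and $A_d(C)=e(n,k,q)$. *)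

(* Defs.v *)
From HB Require Import structures.
From mathcomp Require Import all_boot all_order all_algebra all_field.
Set Implicit Arguments. Unset Strict Implicit. Unset Printing Implicit Defensive.
Import GRing.Theory.
Local Open Scope ring_scope.

(* Linear codes over a finite field F (q = #|F|): an [n,k]_q code is a
   k-dimensional subspace of F^n = 'rV[F]_n. *)

Definition wt (F : finFieldType) (n : nat) (c : 'rV[F]_n) : nat :=
  #|[set i : 'I_n | c 0 i != 0]|.

Definition is_code (F : finFieldType) (n k : nat) (C : {vspace 'rV[F]_n}) : Prop :=
  \dim C = k.

Definition has_min_dist (F : finFieldType) (n : nat) (C : {vspace 'rV[F]_n}) (d : nat)
  : Prop :=
  (exists2 c, c \in C & (c != 0) && (wt c == d)) /\
  (forall c, c \in C -> c != 0 -> (d <= wt c)%N).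

Definition A_w (F : finFieldType) (n : nat) (C : {vspace 'rV[F]_n}) (w : nat) : nat :=
  #|[set c : 'rV[F]_n | (c \in C) && (wt c == w)]|.

(* Main.v *)
Require Import Defs.
From HB Require Import structures.
From mathcomp Require Import all_boot all_order all_algebra all_field.
From mathcomp Require Import zify.
Set Implicit Arguments. Unset Strict Implicit. Unset Printing Implicit Defensive.
Import GRing.Theory.
Local Open Scope ring_scope.

Lemma card_setE (T : finType) (P : pred T) : #|[set x | P x]| = (\sum_x (P x : nat))%N.
Proof. by rewrite -sum1dep_card big_mkcond. Qed.

Definition zc (F : finFieldType) n (c : 'rV[F]_n) := #|[set i : 'I_n | c 0%R i == 0]|.

Lemma wt_zc (F : finFieldType) n (c : 'rV[F]_n) : (wt c + zc c = n)%N.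
Proof.
rewrite /wt /zc -[X in _ = X]card_ord -(cardsC [set i : 'I_n | c 0%R i != 0]).
congr (_ + _)%N; apply: eq_card => i; by rewrite !inE negbK.
Qed.

Lemma ker_card (F : finFieldType) n (C : {vspace 'rV[F]_n}) (i : 'I_n) :
  \dim C = 2%N ->
  (#|F| <= #|[set c | (c \in C) && (c 0%R i == 0%R)]|)%N /\
  ((exists2 c, c \in C & c 0%R i != 0%R) -> #|[set c | (c \in C) && (c 0%R i == 0%R)]| = #|F|).
Proof.
move=> dC.
pose f := linfun (mulmxr (delta_mx i (0:'I_1)) : 'rV[F]_n -> 'rV[F]_1).
have fE c : (f c == 0) = (c 0%R i == 0%R).
  have e00 : (c *m (delta_mx i (0:'I_1) : 'M_(n,1))) 0 0 = c 0%R i.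
    rewrite !mxE (bigD1 i) //=; rewrite !mxE !eqxx mulr1 big1 ?addr0 // => j /negbTE ji.
    by rewrite mxE ji mulr0.
  rewrite lfunE /=; apply/eqP/eqP => [h|h].
    by rewrite -e00 h mxE.
  apply/matrixP => a b; rewrite !ord1 e00 h mxE //.
have cardK : #|[set c | (c \in C) && (c 0%R i == 0%R)]| = #|(C :&: lker f)%VS|.
  apply: eq_card => c; by rewrite inE memv_cap memv_ker fE.
have dimK := limg_ker_dim f C.
have dimI : (\dim (f @: C) <= 1)%N.
  apply: leq_trans (dimvS (subvf _)) _; rewrite dimvf /dim /= mul1n //.
rewrite cardK card_vspace; split.
  have k1 : (1 <= \dim (C :&: lker f))%N.
    move: dimK dimI; rewrite dC; move: (\dim (C :&: lker f)) (\dim (f @: C)) => a b; lia.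
  by rewrite -{1}(expn1 #|F|) leq_pexp2l //; apply/card_gt0P; exists 0.
case=> c cC ci; have : (\dim (f @: C) != 0)%N.
  rewrite dimv_eq0; apply/eqP => h.
  have : f c \in (f @: C)%VS by rewrite memv_img.
  by rewrite h memv0 fE (negbTE ci).
move=> h; have -> : \dim (C :&: lker f) = 1%N.
  move: dimK dimI h; rewrite dC; move: (\dim (C :&: lker f)) (\dim (f @: C)) => a b; lia.
by rewrite expn1.
Qed.

Lemma sum_zc_eq (F : finFieldType) n (C : {vspace 'rV[F]_n}) :
  (\sum_(c | c \in C) zc c = \sum_i #|[set c | (c \in C) && (c 0%R i == 0%R)]|)%N.
Proof.
rewrite /zc; under eq_bigr do rewrite card_setE.
rewrite exchange_big; apply: eq_bigr => i _.
rewrite card_setE big_mkcond; apply: eq_bigr => c _ /=.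
by case: (c \in C).
Qed.

Lemma sum_zc_ge (F : finFieldType) n (C : {vspace 'rV[F]_n}) :
  \dim C = 2%N -> (n * #|F| <= \sum_(c | c \in C) zc c)%N.
Proof.
move=> dC; rewrite sum_zc_eq.
have h : (\sum_(i < n) #|F| <= \sum_(i < n) #|[set c | (c \in C) && (c 0%R i == 0%R)]|)%N by apply: leq_sum => i _; exact: (ker_card i dC).1.
apply: leq_trans h.
by rewrite sum_nat_const card_ord.
Qed.

Lemma sum_zc_full (F : finFieldType) n (C : {vspace 'rV[F]_n}) :
  \dim C = 2%N -> (forall i : 'I_n, exists2 c, c \in C & c 0%R i != 0%R) ->
  (\sum_(c | c \in C) zc c = n * #|F|)%N.
Proof.
move=> dC full; rewrite sum_zc_eq.
rewrite (eq_bigr (fun _ => #|F|)) ?sum_nat_const ?card_ord //.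
by move=> i _; apply: (ker_card i dC).2.
Qed.

Lemma zc0 (F : finFieldType) n : zc (0 : 'rV[F]_n) = n.
Proof.
rewrite /zc -[RHS]card_ord; apply: eq_card => i; by rewrite inE mxE eqxx.
Qed.

Lemma split0 (F : finFieldType) n (C : {vspace 'rV[F]_n}) (g : 'rV[F]_n -> nat) :
  (\sum_(c | c \in C) g c = g 0%R + \sum_(c | (c \in C) && (c != 0%R)) g c)%N.
Proof. by rewrite (bigD1 0) ?mem0v //=. Qed.

Lemma cardC0 (F : finFieldType) n (C : {vspace 'rV[F]_n}) :
  \dim C = 2%N -> (\sum_(c | (c \in C) && (c != 0%R)) 1 = #|F| ^ 2 - 1)%N.
Proof.
move=> dC; rewrite sum1dep_card -dC -card_vspace.
rewrite [X in (_ = X - 1)%N](cardD1 0) mem0v /= add1n subSS subn0; apply: eq_card => c.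
by rewrite !inE andbC.
Qed.

Lemma key_ineq (F : finFieldType) n (C : {vspace 'rV[F]_n}) :
  \dim C = 2%N ->
  (n * (#|F| - 1) <= \sum_(c | (c \in C) && (c != 0%R)) zc c)%N.
Proof.
move=> dC; have := sum_zc_ge dC; rewrite split0 zc0.
have q1 : (1 <= #|F|)%N by apply/card_gt0P; exists 0.
rewrite mulnBr muln1; lia.
Qed.

Lemma sum_const_C0 (F : finFieldType) n (C : {vspace 'rV[F]_n}) k :
  \dim C = 2%N -> (\sum_(c | (c \in C) && (c != 0%R)) k = k * (#|F| ^ 2 - 1))%N.
Proof.
move=> dC; rewrite -(cardC0 dC) big_distrr /=; apply: eq_bigr => c _; by rewrite muln1.
Qed.

Lemma q_ge2 (F : finFieldType) : (2 <= #|F|)%N.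
Proof.
exact: finNzRing_gt1.
Qed.

Lemma wt_le (F : finFieldType) n (c : 'rV[F]_n) : (wt c <= n)%N.
Proof. by have := wt_zc c; lia. Qed.

Lemma part2 (F : finFieldType) (s t n : nat) (C : {vspace 'rV[F]_n}) d :
  (t < #|F|)%N -> n = (s * (#|F| + 1) + t + 1)%N ->
  \dim C = 2%N -> has_min_dist C d -> (d <= s * #|F| + t)%N.
Proof.
move=> tq En dC [[c0 c0C /andP [c0n /eqP wc0]] md].
rewrite leqNgt; apply/negP => dlt.
have dn : (d <= n)%N by rewrite -wc0 wt_le.
have h1 := key_ineq dC.
have h2 : (\sum_(c | (c \in C) && (c != 0%R)) zc c <= \sum_(c | (c \in C) && (c != 0%R)) s)%N.
  apply: leq_sum => c /andP [cC cn]; have := md c cC cn; have := wt_zc c; lia.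
rewrite sum_const_C0 // in h2.
have q2 := q_ge2 F.
move: (#|F|) q2 tq En dlt h1 h2 => q q2 tq En dlt h1 h2.
have {h1 h2} : (n * (q - 1) <= (s * (q + 1)) * (q - 1))%N.
  apply: leq_trans (leq_trans h1 h2) _.
  have -> : (q ^ 2 - 1 = (q + 1) * (q - 1))%N.
    rewrite -mulnn; nia.
  by rewrite mulnA.
rewrite leq_pmul2r ?subn_gt0 //; lia.
Qed.

Lemma A_w_ge (F : finFieldType) n (C : {vspace 'rV[F]_n}) d :
  (\sum_(c | (c \in C) && (c != 0%R)) (wt c == d : nat) <= A_w C d)%N.
Proof.
rewrite /A_w card_setE big_mkcond /=; apply: leq_sum => c _.
by case: (c \in C); case: (c != 0); case: (wt c == d).
Qed.

Lemma arith3 (q s t n S B A : nat) : (2 <= q)%N -> n = (s*(q+1)+t+1)%N ->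
  (n*(q-1) <= S)%N -> (S <= s*(q^2-1) + B)%N -> (B <= A)%N -> ((q-1)*(t+1) <= A)%N.
Proof.
move=> q2 En h1 h2 h3.
have e : (q ^ 2 - 1 = (q + 1) * (q - 1))%N by rewrite -mulnn; nia.
rewrite e in h2; subst n.
set Q := (q - 1)%N in h1 h2 *; set X := (s * (q + 1))%N in h1 h2.
have : (X * Q + (t + 1) * Q <= X * Q + B)%N.
  rewrite -mulnDl addnA; apply: leq_trans h1 (leq_trans h2 _).
  by rewrite mulnA.
rewrite leq_add2l mulnC => h; exact: leq_trans h h3.
Qed.

Lemma part3 (F : finFieldType) (s t n : nat) (C : {vspace 'rV[F]_n}) :
  (t < #|F|)%N -> n = (s * (#|F| + 1) + t + 1)%N ->
  \dim C = 2%N -> has_min_dist C (s * #|F| + t)%N ->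
  ((#|F| - 1) * (t + 1) <= A_w C (s * #|F| + t))%N.
Proof.
move=> tq En dC [_ md].
have h1 := key_ineq dC.
have h2 : (\sum_(c | (c \in C) && (c != 0%R)) zc c <=
   \sum_(c | (c \in C) && (c != 0%R)) (s + (wt c == (s * #|F| + t)%N)))%N.
  apply: leq_sum => c /andP [cC cn]; have := md c cC cn; have := wt_zc c.
  move: En; rewrite mulnDr muln1; set q := #|F| => En.
  case: eqP => h /= e1 e2; move: e1 e2 h En; move: (wt c) (zc c) => w z; [lia | move=> e1 e2 /eqP e3 e4; lia].
rewrite big_split /= sum_const_C0 // in h2.
have h3 := A_w_ge C (s * #|F| + t)%N.
exact: arith3 (q_ge2 F) En h1 h2 h3.
Qed.

Lemma wt0 (F : finFieldType) n : wt (0 : 'rV[F]_n) = 0%N.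
Proof. by apply/eqP; rewrite cards_eq0; apply/eqP/setP => i; rewrite !inE mxE eqxx. Qed.

Lemma A_w_eq (F : finFieldType) n (C : {vspace 'rV[F]_n}) d : (0 < d)%N ->
  (\sum_(c | (c \in C) && (c != 0%R)) (wt c == d : nat) = A_w C d)%N.
Proof.
move=> dp; rewrite /A_w card_setE big_mkcond /=; apply: eq_bigr => c _.
case: (c \in C) => //=; have [->|//] := eqVneq c 0.
by rewrite wt0; case: eqP => // d0; rewrite -d0 in dp.
Qed.

Lemma block_sum (f : nat -> nat) m p : (0 < p)%N ->
  (\sum_(0 <= k < m * p) f (k %% p) = m * \sum_(0 <= r < p) f r)%N.
Proof.
move=> p0; elim: m => [|m IH]; first by rewrite mul0n big_geq.
rewrite mulSn addnC (@big_cat_nat _ _ _ (m * p)) ?leq_addr //= IH.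
rewrite -{1}[(m * p)%N]add0n big_addn addKn.
rewrite [in RHS]mulSn addnC; congr (_ + _)%N.
apply: eq_big_nat => i /andP [_ ip]; by rewrite addnC modnMDl modn_small.
Qed.

Lemma lin_count (F : finFieldType) (x y : F) : (x != 0) || (y != 0) ->
  (\sum_(a : F) ((x + y * a == 0)%R : nat) = (y != 0)%R)%N.
Proof.
move=> nz; rewrite -card_setE.
have [y0|yn0] := eqVneq y 0.
  rewrite y0 eqxx orbF in nz *; apply/eqP; rewrite cards_eq0; apply/eqP/setP => a.
  by rewrite !inE mul0r addr0 (negbTE nz).
rewrite (_ : [set a | x + y * a == 0] = [set - x / y]) ?cards1 //.
apply/setP => a; rewrite !inE; apply/eqP/eqP => [h|->].
  apply: (mulfI yn0); rewrite mulrCA mulfV // mulr1.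
  by apply/eqP; rewrite -addr_eq0 addrC h.
by rewrite mulrCA mulfV // mulr1 subrr.
Qed.

Lemma enum_sum (F : finFieldType) (f : F -> nat) :
  (\sum_(0 <= r < #|F|) f (nth (0%R:F) (enum F) r) = \sum_(a : F) f a)%N.
Proof.
by rewrite cardT -(big_nth (0%R:F) predT (fun a => f a)) big_enum.
Qed.


Section Construction.
Variables (F : finFieldType) (s t n : nat).
Hypotheses (st : (0 < s + t)%N) (tq : (t < #|F|)%N) (En : n = (s * (#|F| + 1) + t + 1)%N).

Definition el r := nth (0%R : F) (enum F) r.
Definition rk k := if (k < s * (#|F| + 1))%N then (k %% (#|F| + 1))%N else (k - s * (#|F| + 1))%N.
Definition av r : F := if (r < #|F|)%N then 1 else 0.
Definition bv r : F := if (r < #|F|)%N then el r else 1.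
Definition g1 : 'rV[F]_n := \row_(i < n) av (rk i).
Definition g2 : 'rV[F]_n := \row_(i < n) bv (rk i).
Definition Cc : {vspace 'rV[F]_n} := <<[:: g2; g1]>>%VS.

Lemma q2 : (2 <= #|F|)%N. Proof. exact: finNzRing_gt1. Qed.

Lemma memC c : c \in Cc -> exists x y, c = x *: g1 + y *: g2.
Proof.
rewrite /Cc span_cons span_seq1 => /memv_addP [u /vlineP [y ->] [v /vlineP [x ->] ->]].
by exists x, y; rewrite addrC.
Qed.

Lemma g1C : g1 \in Cc. Proof. by apply: memv_span; rewrite !inE eqxx orbT. Qed.
Lemma g2C : g2 \in Cc. Proof. by apply: memv_span; rewrite !inE eqxx. Qed.

Lemma n2 : (2 <= n)%N.
Proof. move: (#|F|) st En => q h1 h2. lia. Qed.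

Lemma rk_small k : (k < 2)%N -> rk k = k.
Proof.
move=> k2; have := q2; rewrite /rk; case: ifP => h q2'.
  by rewrite modn_small //; lia.
have : (s * (#|F| + 1) <= k)%N by lia.
case: s => [|s']; first by rewrite mul0n subn0.
rewrite mulSn; lia.
Qed.

Lemma el01 : el 0 != el 1.
Proof.
have hs := q2; rewrite cardT in hs.
rewrite /el nth_uniq ?enum_uniq //; apply: leq_trans hs; done.
Qed.

Lemma dimC : \dim Cc = 2%N.
Proof.
have hn := n2.
pose i0 : 'I_n := Ordinal (leq_trans (isT : (0 < 2)%N) hn).
pose i1 : 'I_n := Ordinal hn.
have r0 : rk i0 = 0%N by rewrite rk_small.
have r1 : rk i1 = 1%N by rewrite rk_small.
have q2' := q2.
have qp : (0 < #|F|)%N := ltnW q2'.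
have : free [:: g2; g1].
  rewrite free_cons seq1_free span_seq1; apply/andP; split.
    apply/vlineP => [[k hk]].
    have e0 : el 0 = k.
      have := congr1 (fun m : 'rV[F]_n => m 0%R i0) hk.
      by rewrite /= !mxE r0 /bv /av qp mulr1.
    have e1 : el 1 = k.
      have := congr1 (fun m : 'rV[F]_n => m 0%R i1) hk.
      by rewrite /= !mxE r1 /bv /av q2' mulr1.
    by move: el01; rewrite e0 e1 eqxx.
  apply/eqP => h; have := congr1 (fun m : 'rV[F]_n => m 0%R i0) h.
  rewrite /= !mxE r0 /av qp.
  by move/eqP; rewrite oner_eq0.
by move/eqP.
Qed.

Lemma fullC (i : 'I_n) : exists2 c, c \in Cc & c 0%R i != 0%R.
Proof.
case h: (rk i < #|F|)%N.
  by exists g1; rewrite ?g1C // mxE /av h oner_eq0.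
by exists g2; rewrite ?g2C // mxE /bv h oner_eq0.
Qed.

Lemma zc_val (x y : F) : (x != 0) || (y != 0) ->
  exists2 E, (E <= 1)%N & zc (x *: g1 + y *: g2) = (s + E)%N.
Proof.
move=> nz.
pose h r := ((x * av r + y * bv r == 0)%R : nat).
have Z : zc (x *: g1 + y *: g2) = (\sum_(0 <= k < n) h (rk k))%N.
  rewrite /zc card_setE big_mkord; apply: eq_bigr => i _; by rewrite !mxE.
have hq : (\sum_(0 <= r < #|F|) h r = (y != 0%R))%N.
  rewrite -(lin_count nz) -enum_sum; apply: eq_big_nat => r /andP [_ rq].
  by rewrite /h /av /bv rq mulr1.
have blk : (\sum_(0 <= r < #|F| + 1) h r = 1)%N.
  rewrite addn1 big_nat_recr //= hq /h /av /bv ltnn mulr0 add0r mulr1.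
  by case: eqP.
have Sdiv : (s * (#|F| + 1) <= n)%N by rewrite En -addnA leq_addr.
rewrite Z (@big_cat_nat _ _ _ (s * (#|F| + 1))) //=.
rewrite (@eq_big_nat _ _ _ 0 (s * (#|F| + 1)) _ (fun k => h (k %% (#|F| + 1))%N)); last first.
  by move=> k /andP [_ ks]; rewrite /rk ks.
rewrite block_sum ?addn1 // -[(#|F|.+1)%N]addn1 blk muln1.
rewrite -{1}[(s * (#|F| + 1))%N]add0n big_addn.
have -> : (n - s * (#|F| + 1) = t + 1)%N by rewrite En -addnA addKn.
rewrite (@eq_big_nat _ _ _ 0 (t + 1) _ h); last first.
  move=> i _; rewrite /rk ifF ?addnK //.
  by apply/negbTE; rewrite -leqNgt leq_addl.
exists (\sum_(0 <= i < t + 1) h i)%N => //.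
have tq' : (t + 1 <= #|F|)%N by rewrite addn1.
move: hq; rewrite (@big_cat_nat _ _ _ (t + 1)) //= => hq.
apply: leq_trans (leq_addr (\sum_(t + 1 <= i < #|F|) h i)%N _) _.
by rewrite hq leq_b1.
Qed.

End Construction.

Lemma arith1 (q s t n A : nat) : (2 <= q)%N -> n = (s*(q+1)+t+1)%N ->
  (n * q = n + (s * (q ^ 2 - 1) + A))%N -> A = ((q - 1) * (t + 1))%N.
Proof.
move=> q2 En h.
have e : (q ^ 2 - 1 = (q + 1) * (q - 1))%N by rewrite -mulnn; nia.
have e1 : (n * q = n + n * (q - 1))%N by rewrite mulnBr muln1 subnKC // leq_pmulr //; lia.
have e2 : (n * (q - 1) = s * (q + 1) * (q - 1) + (q - 1) * (t + 1))%N.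
  by rewrite En -addnA mulnDl [((t + 1) * _)%N]mulnC.
rewrite e mulnA e1 e2 in h.
move: h; move: (s * (q + 1) * (q - 1))%N ((q - 1) * (t + 1))%N => X Y; lia.
Qed.

Lemma part1 (F : finFieldType) (s t n : nat) :
  (0 < s + t)%N -> (t < #|F|)%N -> n = (s * (#|F| + 1) + t + 1)%N ->
  exists C : {vspace 'rV[F]_n},
    [/\ is_code 2 C, has_min_dist C (s * #|F| + t)%N &
        A_w C (s * #|F| + t)%N = ((#|F| - 1) * (t + 1))%N].
Proof.
move=> st tq En.
have dC := dimC st tq En.
set d := (s * #|F| + t)%N.
have q2' := q_ge2 F.
have dpos : (0 < d)%N.
  have : (s <= s * #|F|)%N by rewrite leq_pmulr // ltnW.
  rewrite /d; lia.
have zcC c : c \in Cc F s n -> c != 0%R -> exists2 E, (E <= 1)%N & zc c = (s + E)%N.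
  move=> cC cn; have [x [y ce]] := memC cC.
  rewrite ce in cn *; apply: (zc_val tq En).
  case: (eqVneq x 0) => [x0|xn]; last by apply/orP; left.
  case: (eqVneq y 0) => [y0|yn]; last by apply/orP; right.
  by move: cn; rewrite x0 y0 !scale0r addr0 eqxx.
have wtC c : c \in Cc F s n -> c != 0%R -> (wt c + zc c = n)%N /\ exists2 E, (E <= 1)%N & zc c = (s + E)%N.
  by move=> cC cn; split; [exact: wt_zc | exact: zcC].
have term c : c \in Cc F s n -> c != 0%R -> zc c = (s + (wt c == d))%N.
  move=> cC cn; have [h1 [E E1 h2]] := wtC c cC cn; move: h1 h2 E1.
  move: En; rewrite /d mulnDr muln1 => En.
  move: (wt c) (zc c) => w z h1 h2 E1; case: eqP => h; [|move/eqP: h => h]; lia.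
have S1 := sum_zc_full dC (@fullC F s n).
rewrite split0 zc0 (eq_bigr (fun c => s + (wt c == d))%N) in S1; last first.
  by move=> c /andP [cC cn]; apply: term.
rewrite big_split /= sum_const_C0 // A_w_eq // in S1.
have Aeq := arith1 q2' En (esym S1).
exists (Cc F s n); split => //; split.
  have : (0 < A_w (Cc F s n) d)%N.
    by rewrite Aeq muln_gt0 addn1 subn_gt0 /= andbT.
  rewrite /A_w card_gt0 => /set0Pn [c]; rewrite inE => /andP [cC /eqP wc].
  exists c => //; rewrite wc eqxx andbT; apply/negP => /eqP c0.
  by move: wc dpos; rewrite c0 wt0 => <-.
move=> c cC cn; have [h1 [E E1 h2]] := wtC c cC cn; move: h1 h2 E1.
move: En; rewrite /d mulnDr muln1 => En.
move: (wt c) (zc c) => w z; lia.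
Qed.

Theorem theorem3 (F : finFieldType) (s t n : nat) :
  (0 < s + t)%N -> (t < #|F|)%N -> n = (s * (#|F| + 1) + t + 1)%N ->
  [/\ (exists C : {vspace 'rV[F]_n},
         [/\ is_code 2 C, has_min_dist C (s * #|F| + t)%N &
             A_w C (s * #|F| + t)%N = ((#|F| - 1) * (t + 1))%N]),
      (forall (C : {vspace 'rV[F]_n}) (d : nat),
         is_code 2 C -> has_min_dist C d -> (d <= s * #|F| + t)%N) &
      (forall C : {vspace 'rV[F]_n},
         is_code 2 C -> has_min_dist C (s * #|F| + t)%N ->
         ((#|F| - 1) * (t + 1) <= A_w C (s * #|F| + t))%N)].
Proof.
move=> st tq En; split.
- exact: part1.
- move=> C d dC md; exact: part2 tq En dC md.
- move=> C dC md; exact: part3 tq En dC md.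
Qed.
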